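(* Let $q$ be a prime power and let $C\subseteq\mathbb{F}_q^n$ be an $[n,\ell,d]_q$ classical linear code such that $C^{*3}:=\mathrm{span}\{c_1*c_2*c_3: c_1,c_2,c_3\in C\}$ has distance $d'$ and $C^\perp$ has distance $d^\perp$. Then for every positive integer $k<\min\{\ell,d,d',d^\perp\}$, there exists an $[[n-k,\,k,\,\geq\min\{d,d^\perp\}-k]]_q$ quantum CSS code that supports a transversal $CCZ_q$ gate.
   Context: $x*y$ denotes the componentwise product in $\mathbb{F}_q^n$, $x\cdot y=\sum_ix_iy_i$, and $V^\perp$ is the dual w.r.t. this form. An $[n,\ell,d]_q$ classical code is an $\ell$-dimensional subspace of $\mathbb{F}_q^n$ with minimum Hamming weight of nonzero codewords $d$. A quantum CSS code $\mathrm{CSS}(Q_X,Q_Z)$ of length $n$ over $\mathbb{F}_q$ is a pair of subspaces $Q_X,Q_Z\subseteq\mathbb{F}_q^n$ with $Q_X^\perp\subseteq Q_Z$, of dimension $k=\dim Q_Z-\dim Q_X^\perp$ and distance $\min\{|y|:y\in(Q_X\setminus Q_Z^\perp)\cup(Q_Z\setminus Q_X^\perp)\}$ ($|y|$ Hamming weight); it is an $[[n,k,d]]_q$ code. A $Z$ encoding function is an $\mathbb{F}_q$-linear isomorphism $\mathrm{Enc}_Z:\mathbb{F}_q^k\to Q_Z/Q_X^\perp$. A code $Q$ with $Z$ encoding function supports a transversal $CCZ_q$ gate if there is a coefficients vector $b\in\mathbb{F}_q^n$ such that for all $z^{(1)},z^{(2)},z^{(3)}\in\mathbb{F}_q^k$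 and all $z^{(h)\prime}\in\mathrm{Enc}_Z(z^{(h)})$, $\sum_{j\in[k]}z^{(1)}_jz^{(2)}_jz^{(3)}_j=\sum_{j\in[n]}b_jz^{(1)\prime}_jz^{(2)\prime}_jz^{(3)\prime}_j$. *)

(* Defs.v *)
From HB Require Import structures.
From mathcomp Require Import all_boot all_order all_algebra finalg.
Set Implicit Arguments. Unset Strict Implicit. Unset Printing Implicit Defensive.
Import GRing.Theory.
Local Open Scope ring_scope.

Definition cmul (F : finFieldType) (n : nat) (x y : 'rV[F]_n) : 'rV[F]_n :=
  \row_i (x 0 i * y 0 i).

Definition dot (F : finFieldType) (n : nat) (x y : 'rV[F]_n) : F :=
  \sum_(i < n) x 0 i * y 0 i.

Definition wt (F : finFieldType) (n : nat) (x : 'rV[F]_n) : nat :=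
  #|[set i : 'I_n | x 0 i != 0]|.

(* V^perp w.r.t. dot: the span of the (already linear) set of all x orthogonal to V *)
Definition dualv (F : finFieldType) (n : nat) (V : {vspace 'rV[F]_n})
  : {vspace 'rV[F]_n} :=
  <<[seq x <- enum 'rV[F]_n | [forall y : 'rV[F]_n, (y \in V) ==> (dot x y == 0%R)]]>>%VS.

Definition cube_code (F : finFieldType) (n : nat) (C : {vspace 'rV[F]_n})
  : {vspace 'rV[F]_n} :=
  let S := [seq x <- enum 'rV[F]_n | x \in C] in
  <<flatten [seq [seq cmul (cmul a b) c | b <- S, c <- S] | a <- S]>>%VS.

Definition has_distance (F : finFieldType) (n : nat) (V : {vspace 'rV[F]_n})
  (d : nat) : Prop :=
  (exists2 x, x \in V & (x != 0) /\ wt x = d) /\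
  (forall x, x \in V -> x != 0 -> (d <= wt x)%N).

Definition is_CSS (F : finFieldType) (n : nat) (QX QZ : {vspace 'rV[F]_n}) : Prop :=
  (dualv QX <= QZ)%VS.

Definition css_dim (F : finFieldType) (n : nat) (QX QZ : {vspace 'rV[F]_n}) : nat :=
  (\dim QZ - \dim (dualv QX))%N.

Definition css_dist_ge (F : finFieldType) (n : nat) (QX QZ : {vspace 'rV[F]_n})
  (m : nat) : Prop :=
  forall y : 'rV[F]_n,
    ((y \in QX) && (y \notin dualv QZ)) || ((y \in QZ) && (y \notin dualv QX)) ->
    (m <= wt y)%N.

(* A Z encoding function Enc_Z : F^k -> QZ / QX^perp (a linear isomorphism),
   represented by a linear lift f : F^k -> QZ: Enc_Z(z) is the coset
   f z + QX^perp.  The induced map to the quotient is an isomorphism iff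
   it is injective and surjective. *)
Definition is_Z_encoding (F : finFieldType) (n k : nat)
  (QX QZ : {vspace 'rV[F]_n}) (f : 'Hom('rV[F]_k, 'rV[F]_n)) : Prop :=
  [/\ forall z, f z \in QZ,
      forall z, f z \in dualv QX -> z = 0
    & forall y, y \in QZ -> exists z, y - f z \in dualv QX].

Definition supports_CCZ (F : finFieldType) (n k : nat)
  (QX QZ : {vspace 'rV[F]_n}) (f : 'Hom('rV[F]_k, 'rV[F]_n)) : Prop :=
  exists b : 'rV[F]_n,
    forall (z1 z2 z3 : 'rV[F]_k) (z1' z2' z3' : 'rV[F]_n),
      z1' - f z1 \in dualv QX -> z2' - f z2 \in dualv QX ->
      z3' - f z3 \in dualv QX ->
      \sum_(j < k) z1 0 j * z2 0 j * z3 0 j =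
      \sum_(j < n) b 0 j * z1' 0 j * z2' 0 j * z3' 0 j.

(* Main.v *)
Require Import Defs.
From HB Require Import structures.
From mathcomp Require Import all_boot all_order all_algebra finalg.
From mathcomp Require Import zify.
Set Implicit Arguments. Unset Strict Implicit. Unset Printing Implicit Defensive.
Import GRing.Theory.
Local Open Scope ring_scope.

Section Lin.
Variable F : finFieldType.

Lemma dotC n (x y : 'rV[F]_n) : dot x y = dot y x.
Proof. by apply: eq_bigr => i _; rewrite mulrC. Qed.

Lemma dotDr n (x y z : 'rV[F]_n) : dot x (y + z) = dot x y + dot x z.
Proof. by rewrite /dot -big_split; apply: eq_bigr => i _; rewrite mxE mulrDr. Qed.

Lemma dotZr n a (x y : 'rV[F]_n) : dot x (a *: y) = a * dot x y.
Proof. by rewrite /dot mulr_sumr; apply: eq_bigr => i _; rewrite mxE mulrCA. Qed.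

Lemma dot0r n (x : 'rV[F]_n) : dot x 0 = 0.
Proof. by rewrite /dot big1 // => i _; rewrite mxE mulr0. Qed.

Lemma dotNr n (x y : 'rV[F]_n) : dot x (- y) = - dot x y.
Proof. by rewrite -scaleN1r dotZr mulN1r. Qed.

Lemma dot_sumr n I (r : seq I) (P : pred I) (x : 'rV[F]_n) G :
  dot x (\sum_(i <- r | P i) G i) = \sum_(i <- r | P i) dot x (G i).
Proof.
elim/big_rec2: _ => [|i y1 y2 _ <-]; first by rewrite dot0r.
by rewrite dotDr.
Qed.

Lemma dotDl n (x y z : 'rV[F]_n) : dot (y + z) x = dot y x + dot z x.
Proof. by rewrite dotC dotDr !(dotC x). Qed.
Lemma dotZl n a (x y : 'rV[F]_n) : dot (a *: y) x = a * dot y x.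
Proof. by rewrite dotC dotZr dotC. Qed.

Lemma dot_row_mx k m (a c : 'rV[F]_k) (b e : 'rV[F]_m) :
  dot (row_mx a b) (row_mx c e) = dot a c + dot b e.
Proof. by rewrite /dot big_split_ord /=; congr (_ + _); apply: eq_bigr => i _;
  rewrite ?row_mxEl ?row_mxEr. Qed.

Lemma wt_row_mx k m (a : 'rV[F]_k) (b : 'rV[F]_m) :
  wt (row_mx a b) = (wt a + wt b)%N.
Proof.
rewrite /wt -!sum1dep_card big_split_ord /=.
by congr (_ + _)%N; apply: eq_bigl => i; rewrite ?row_mxEl ?row_mxEr.
Qed.

Lemma wt_le n (x : 'rV[F]_n) : (wt x <= n)%N.
Proof. by rewrite /wt -[X in (_ <= X)%N]card_ord max_card. Qed.

Lemma memv_dualP n (V : {vspace 'rV[F]_n}) x :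
  reflect (forall y, y \in V -> dot x y = 0) (x \in dualv V).
Proof.
apply: (iffP idP) => [xV y yV | H]; last first.
  apply: memv_span; rewrite mem_filter mem_enum andbT.
  by apply/forallP => y; apply/implyP => /H ->.
move: xV; rewrite /dualv; set S := [seq _ <- _ | _] => xS.
have := coord_span (X := in_tuple S) xS => ->.
rewrite dotC dot_sumr big1 // => i _; rewrite dotZr.
have Si : S`_i \in S := mem_nth 0 (ltn_ord i).
move: Si.
rewrite mem_filter => /andP[/forallP/(_ y)/implyP/(_ yV)/eqP].
by rewrite dotC => ->; rewrite mulr0.
Qed.
Lemma dimvf_rV n : \dim (fullv : {vspace 'rV[F]_n}) = n.
Proof. by rewrite dimvf dim_matrix mul1r. Qed.

Lemma dim_dualv n (V : {vspace 'rV[F]_n}) : (\dim (dualv V) + \dim V)%N = n.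
Proof.
set m := \dim V; set vs := vbasis V.
pose B : 'M[F]_(m, n) := \matrix_(i < m) vs`_i.
pose g : 'Hom('rV[F]_n, 'rV[F]_m) := linfun (mulmxr B^T).
have gE x i : (g x) 0 i = dot x vs`_i.
  by rewrite lfunE /= !mxE; apply: eq_bigr => j _; rewrite !mxE.
have vsV (i : 'I_m) : (vs`_i \in V).
  by apply: vbasis_mem; apply: mem_nth; rewrite size_tuple.
have -> : dualv V = lker g.
  apply/vspaceP => x; rewrite memv_ker; apply/memv_dualP/eqP.
    by move=> H; apply/rowP => i; rewrite gE H ?vsV // mxE.
  move=> H y yV; rewrite (coord_vbasis yV) dot_sumr big1 // => i _.
  by rewrite dotZr -gE H mxE mulr0.
have := limg_ker_dim g fullv; rewrite capfv dimvf_rV => E.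
rewrite -[in RHS]E.
congr (_ + _)%N.
have Bfree : row_free B.
  apply: inj_row_free => v; rewrite mulmx_sum_row => H; apply/rowP => i.
  move/freeP: (basis_free (vbasisP V)) => /(_ (fun i => v 0 i)) Hf.
  rewrite mxE; apply: Hf.
  by rewrite -[RHS]H; apply: eq_bigr => j _; rewrite rowK.
have -> : (g @: fullv)%VS = fullv.
  apply/vspaceP => y; rewrite memvf.
  have : (y <= B^T)%MS by apply: submx_full; rewrite /row_full mxrank_tr.
  case/submxP => D ->; have -> : D *m B^T = g D by rewrite lfunE.
  exact: memv_img (memvf D).
by rewrite dimvf_rV.
Qed.

Lemma dualvS n (V W : {vspace 'rV[F]_n}) :
  (V <= W)%VS -> (dualv W <= dualv V)%VS.
Proof.
move/subvP=> VW; apply/subvP => x /memv_dualP H; apply/memv_dualP => y yV.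
exact/H/VW.
Qed.

Lemma dualvK n (V : {vspace 'rV[F]_n}) : dualv (dualv V) = V.
Proof.
have sV : (V <= dualv (dualv V))%VS.
  apply/subvP => x xV; apply/memv_dualP => y /memv_dualP H.
  by rewrite dotC H.
apply/eqP; rewrite eq_sym eqEdim sV /=.
have := dim_dualv V; have := dim_dualv (dualv V); lia.
Qed.

Lemma wt0 n : wt (0 : 'rV[F]_n) = 0%N.
Proof.
rewrite /wt; apply/eqP; rewrite cards_eq0; apply/eqP/setP => i.
by rewrite !inE mxE eqxx.
Qed.

Lemma wt_split k m (x : 'rV[F]_(k + m)) :
  wt x = (wt (lsubmx x) + wt (rsubmx x))%N.
Proof. by rewrite -{1}[x]hsubmxK wt_row_mx. Qed.

Lemma dist0 n (V : {vspace 'rV[F]_n}) d x :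
  has_distance V d -> x \in V -> (wt x < d)%N -> x = 0.
Proof.
move=> [_ H] xV lt; apply/eqP; apply/negPn/negP => nz.
by have := H x xV nz; rewrite leqNgt lt.
Qed.

Lemma dot_cmul3 k m (w a b c : 'rV[F]_(k + m)) :
  dot w (cmul (cmul a b) c) =
  \sum_(j < k) lsubmx w 0 j * lsubmx a 0 j * lsubmx b 0 j * lsubmx c 0 j +
  \sum_(j < m) rsubmx w 0 j * rsubmx a 0 j * rsubmx b 0 j * rsubmx c 0 j.
Proof.
rewrite /dot big_split_ord /=; congr (_ + _); apply: eq_bigr => j _;
by rewrite !mxE !mulrA.
Qed.

Lemma mem_cube n (C : {vspace 'rV[F]_n}) a b c :
  a \in C -> b \in C -> c \in C -> cmul (cmul a b) c \in cube_code C.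
Proof.
move=> aC bC cC; rewrite /cube_code; apply: memv_span; apply/flattenP.
have mS x : x \in C -> x \in [seq x <- enum 'rV[F]_n | x \in C].
  by move=> xC; rewrite mem_filter xC mem_enum.
eexists; first by apply: map_f; apply: mS aC.
exact: allpairs_f (mS _ bC) (mS _ cC).
Qed.

Lemma surj_RS k m (W : {vspace 'rV[F]_(k + m)}) :
  (forall u : 'rV[F]_k, row_mx u 0 \in dualv W -> u = 0) ->
  (linfun (@lsubmx F 1 k m) @: W)%VS = fullv.
Proof.
move=> H; set I := (_ @: W)%VS.
have I0 : dualv I = 0%VS.
  apply/eqP; rewrite -subv0; apply/subvP => u /memv_dualP Hu.
  rewrite memv0; apply/eqP; apply: H; apply/memv_dualP => w wW.
  rewrite -[w]hsubmxK dot_row_mx (dotC 0) dot0r addr0.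
  apply: Hu; have -> : lsubmx w = linfun (@lsubmx F 1 k m) w by rewrite lfunE.
  exact: memv_img.
apply/eqP; rewrite eqEdim subvf dimvf_rV /=.
by have := dim_dualv I; rewrite I0 dimv0 add0n => ->.
Qed.

Lemma dim_inj n p (h : 'Hom('rV[F]_n, 'rV[F]_p)) (U : {vspace 'rV[F]_n}) :
  (forall x, x \in U -> h x = 0 -> x = 0) -> \dim (h @: U) = \dim U.
Proof.
move=> H; have := limg_ker_dim h U.
have -> : (U :&: lker h)%VS = 0%VS.
  apply/eqP; rewrite -subv0; apply/subvP => x.
  rewrite memv_cap memv_ker memv0 => /andP[xU /eqP hx]; apply/eqP; exact: H.
by rewrite dimv0.
Qed.

Lemma main k m (C : {vspace 'rV[F]_(k + m)}) l d d' dperp :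
  \dim C = l ->
  has_distance C d ->
  has_distance (cube_code C) d' ->
  has_distance (dualv C) dperp ->
  (0 < k)%N ->
  (k < minn (minn l d) (minn d' dperp))%N ->
  exists (QX QZ : {vspace 'rV[F]_m}),
    [/\ is_CSS QX QZ, css_dim QX QZ = k,
        css_dist_ge QX QZ (minn d dperp - k)
      & exists f : 'Hom('rV[F]_k, 'rV[F]_m),
          is_Z_encoding QX QZ f /\ supports_CCZ QX QZ f].
Proof.
move=> dimC dC d3 dP k0 hk.
have kl : (k < l)%N by lia.
have kd : (k < d)%N by lia.
have kd' : (k < d')%N by lia.
have kdp : (k < dperp)%N by lia.
pose RS := linfun (@lsubmx F 1 k m).
pose RT := linfun (@rsubmx F 1 k m).
have RSE x : RS x = lsubmx x by rewrite lfunE.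
have RTE x : RT x = rsubmx x by rewrite lfunE.
have wtl (x : 'rV[F]_(k + m)) : (wt (lsubmx x) <= k)%N by apply: wt_le.
have IT x : x \in C -> rsubmx x = 0 -> x = 0.
  move=> xC r0; apply: (dist0 dC xC).
  by rewrite wt_split r0 wt0 addn0; apply: leq_ltn_trans (wtl x) kd.
have IS (V : {vspace 'rV[F]_(k + m)}) e u : has_distance V e -> (k < e)%N ->
    row_mx u 0 \in V -> u = 0.
  move=> hV ke uV; have := dist0 hV uV.
  rewrite wt_row_mx wt0 addn0 => /(_ (leq_ltn_trans (wt_le u) ke)) h.
  by rewrite -(row_mxKl u (0 : 'rV[F]_m)) h linear0.
have SC : (RS @: C)%VS = fullv.
  by apply: surj_RS => u; apply: IS dP kdp.
have S3 : (RS @: dualv (cube_code C))%VS = fullv.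
  by apply: surj_RS => u; rewrite dualvK; apply: IS d3 kd'.
have Ex (j : 'I_k) : exists c, (c \in C) && (lsubmx c == delta_mx 0 j).
  have : delta_mx 0 j \in (RS @: C)%VS by rewrite SC memvf.
  by case/memv_imgP => c cC ->; exists c; rewrite cC RSE eqxx.
pose Cm : 'M[F]_(k, k + m) := \matrix_(j < k) xchoose (Ex j).
have CmP (z : 'rV[F]_k) : (z *m Cm \in C) && (lsubmx (z *m Cm) == z).
  rewrite mulmx_sum_row; apply/andP; split.
    apply: memv_suml => j _; apply: memvZ; rewrite rowK.
    by case/andP: (xchooseP (Ex j)).
  rewrite linear_sum /= [X in _ == X]row_sum_delta; apply/eqP.
  apply: eq_bigr => j _; rewrite linearZ /= rowK.
  by case/andP: (xchooseP (Ex j)) => _ /eqP ->.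
have CmC (z : 'rV[F]_k) : z *m Cm \in C by case/andP: (CmP z).
have CmS (z : 'rV[F]_k) : lsubmx (z *m Cm) = z by case/andP: (CmP z) => _ /eqP.
pose f := (RT \o linfun (mulmxr Cm))%VF.
have fE (z : 'rV[F]_k) : f z = rsubmx (z *m Cm) by rewrite comp_lfunE RTE lfunE.
pose QZ := (RT @: C)%VS.
pose Sh := (RT @: (C :&: lker RS))%VS.
pose QX := dualv Sh.
have dQX : dualv QX = Sh by rewrite dualvK.
have ShP y : reflect (exists2 s, (s \in C) && (lsubmx s == 0) & y = rsubmx s)
                     (y \in Sh).
  apply: (iffP memv_imgP) => [[s] | [s]].
    by rewrite memv_cap memv_ker RSE RTE => sC ->; exists s.
  move=> sC ->; exists s; rewrite ?RTE // memv_cap memv_ker RSE.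
  by case/andP: sC => -> ->.
exists QX, QZ; split.
- by rewrite /is_CSS dQX; apply: limgS; apply: capvSl.
- rewrite /css_dim dQX.
  have -> : \dim QZ = l by rewrite -dimC; apply: dim_inj => x xC; rewrite RTE; exact: IT.
  have -> : \dim Sh = \dim (C :&: lker RS).
    apply: dim_inj => x; rewrite memv_cap => /andP[xC _]; rewrite RTE; exact: IT.
  have := limg_ker_dim RS C; rewrite SC dimvf_rV dimC => <-; by rewrite addKn.
- move=> y /orP[/andP[yQX yQZ] | /andP[yQZ yQX]].
  +
    have sub : (dualv (RT @: dualv C) <= Sh)%VS.
      apply/subvP => x /memv_dualP Hx; apply/ShP.
      have XC : row_mx 0 x \in C.
        rewrite -(dualvK C); apply/memv_dualP => u uC.
        rewrite -[u]hsubmxK dot_row_mx dotC dot0r add0r Hx //.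
        by rewrite -RTE; apply: memv_img.
      by exists (row_mx 0 x); rewrite ?XC ?row_mxKl ?eqxx ?row_mxKr.
    have := dualvS sub; rewrite dualvK => /subvP/(_ y yQX).
    case/memv_imgP => u uC yE; rewrite RTE in yE.
    have unz : u != 0.
      apply: contraNneq yQZ => u0; rewrite yE u0 linear0; exact: mem0v.
    have [_ /(_ u uC unz)] := dP.
    rewrite wt_split -yE; have := wtl u; lia.
  + case/memv_imgP: yQZ => c cC yE; rewrite RTE in yE.
    have cnz : c != 0.
      apply: contraNneq yQX => c0; rewrite dQX yE c0 linear0; exact: mem0v.
    have [_ /(_ c cC cnz)] := dC.
    rewrite wt_split -yE; have := wtl c; lia.
- exists f; split.
  + split.
    * by move=> z; rewrite fE -RTE; apply: memv_img.
    * move=> z; rewrite dQX fE => /ShP[s /andP[sC /eqP s0] E].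
      have : z *m Cm - s = 0.
        by apply: IT; [rewrite memvB | rewrite linearB /= E subrr].
      move/eqP; rewrite subr_eq0 => /eqP E2.
      by rewrite -(CmS z) E2.
    * move=> y; case/memv_imgP => c cC ->; exists (lsubmx c).
      rewrite dQX fE RTE; apply/ShP; exists (c - lsubmx c *m Cm).
        by rewrite memvB // linearB /= CmS subrr eqxx.
      by rewrite linearB.
  + have : const_mx (-1) \in (RS @: dualv (cube_code C))%VS by rewrite S3 memvf.
    case/memv_imgP => w wP; rewrite RSE => wE.
    exists (rsubmx w) => z1 z2 z3 z1' z2' z3'.
    rewrite dQX !fE.
    have dec z z' : z' - rsubmx (z *m Cm) \in Sh ->
        exists2 c, c \in C & lsubmx c = z /\ rsubmx c = z'.
      case/ShP => s /andP[sC /eqP s0] E.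
      exists (z *m Cm + s); first by rewrite memvD.
      rewrite !linearD /= CmS s0 addr0 -E; split => //.
      by rewrite addrC subrK.
    case/dec => c1 c1C [l1 r1]; case/dec => c2 c2C [l2 r2];
      case/dec => c3 c3C [l3 r3].
    have /memv_dualP/(_ _ (mem_cube c1C c2C c3C)) := wP.
    rewrite dot_cmul3 -wE l1 l2 l3 r1 r2 r3 => /eqP.
    rewrite addrC addr_eq0 => /eqP ->.
    rewrite -sumrN; apply: eq_bigr => j _; rewrite mxE.
    by rewrite !mulN1r !mulNr opprK.
Qed.

End Lin.

Unset Implicit Arguments.

Theorem theorem3p1 (F : finFieldType) (n l d d' dperp : nat)
  (C : {vspace 'rV[F]_n}) :
  \dim C = l ->
  has_distance C d ->
  has_distance (cube_code C) d' ->
  has_distance (dualv C) dperp ->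
  forall k : nat, (0 < k)%N ->
    (k < minn (minn l d) (minn d' dperp))%N ->
    exists (QX QZ : {vspace 'rV[F]_(n - k)}),
      [/\ is_CSS QX QZ, css_dim QX QZ = k,
          css_dist_ge QX QZ (minn d dperp - k)
        & exists f : 'Hom('rV[F]_k, 'rV[F]_(n - k)),
            is_Z_encoding QX QZ f /\ supports_CCZ QX QZ f].
Proof.
move=> dimC dC d3 dP k k0 hk.
have kn : (k <= n)%N.
  case: (dC) => [[x _ [_ wx]] _]; have := wt_le x; rewrite wx; lia.
move: (n - k)%N (subnKC kn) => m Em; subst n.
exact: main dimC dC d3 dP k0 hk.
Qed.
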